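(* Let $\mathcal{P}\subset\mathbb{R}^d$ be a finite set of item vectors, $\bm{q}\in\mathbb{R}^d$, $k>1$ an integer, $\lambda\in[0,1]$, $\mu>0$, and assume $\langle\bm{x},\bm{y}\rangle\ge0$ for all $\bm{x},\bm{y}\in\mathcal{P}\cup\{\bm{q}\}$. Then the set function $f_{avg}:2^{\mathcal{P}}\to\mathbb{R}$, $$f_{avg}(\mathcal{S}) = \tfrac{\lambda}{k}\sum_{\bm{p}\in\mathcal{S}}\langle\bm{p},\bm{q}\rangle - \tfrac{2\mu(1-\lambda)}{k(k-1)}\sum_{\{\bm{p},\bm{p}'\}\subseteq\mathcal{S},\,\bm{p}\neq\bm{p}'}\langle\bm{p},\bm{p}'\rangle,$$ is submodular, i.e., $f_{avg}(\mathcal{S}\cup\{\bm{p}\})-f_{avg}(\mathcal{S})\ge f_{avg}(\mathcal{T}\cup\{\bm{p}\})-f_{avg}(\mathcal{T})$ for all $\mathcal{S}\subseteq\mathcal{T}\subseteq\mathcal{P}$ and $\bm{p}\in\mathcal{P}\setminus\mathcal{T}$.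
   Context: The second sum in $f_{avg}$ runs over unordered pairs of distinct elements of $\mathcal{S}$; $k$ is a fixed parameter (not the size of $\mathcal{S}$). The nonnegativity of inner products is the paper's standing assumption (item and user vectors come from a non-negative matrix factorization). *)

(* Defs.v *)
From HB Require Import structures.
From mathcomp Require Import all_boot all_order all_algebra.
From mathcomp Require Import finmap.
Set Implicit Arguments. Unset Strict Implicit. Unset Printing Implicit Defensive.
Import Order.TTheory GRing.Theory Num.Theory.
Local Open Scope ring_scope.
Local Open Scope fset_scope.

Definition dot (R : realFieldType) (d : nat) (x y : 'rV[R]_d) : R :=
  \sum_(i < d) x 0 i * y 0 i.

(* sum of <p,p'> over unordered pairs {p,p'} of distinct elements of S:
   enumerate S without duplicates and sum over index pairs i < j *)
Definition pair_sum (R : realFieldType) (d : nat) (S : {fset 'rV[R]_d}) : R :=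
  let s := enum_fset S in
  \sum_(i < size s) \sum_(j < size s | (i < j)%N)
     dot (nth 0 s i) (nth 0 s j).

Definition f_avg (R : realFieldType) (d : nat) (k : nat) (lam mu : R)
    (q : 'rV[R]_d) (S : {fset 'rV[R]_d}) : R :=
  lam / k%:R * (\sum_(p <- S) dot p q)
  - (2 * mu * (1 - lam)) / (k * (k - 1))%:R * pair_sum S.

(* Main.v *)
Require Import Defs.
From HB Require Import structures.
From mathcomp Require Import all_boot all_order all_algebra finmap.
From mathcomp Require Import lra.
Import Order.TTheory GRing.Theory Num.Theory.
Local Open Scope ring_scope.
Local Open Scope fset_scope.

Lemma dotC (R : realFieldType) d (x y : 'rV[R]_d) : dot x y = dot y x.
Proof. by apply: eq_bigr => i _; rewrite mulrC. Qed.

Lemma sum_seq_ord (R : realFieldType) d (S : {fset 'rV[R]_d}) (F : 'rV[R]_d -> R) :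
  \sum_(x <- S) F x = \sum_(i < size (enum_fset S)) F (nth 0 (enum_fset S) i).
Proof. by rewrite (big_nth 0) big_mkord. Qed.

Lemma pair_sumE (R : realFieldType) d (S : {fset 'rV[R]_d}) :
  pair_sum S *+ 2 = \sum_(x <- S) \sum_(y <- S) dot x y - \sum_(x <- S) dot x x.
Proof.
rewrite /pair_sum.
have -> : \sum_(x <- S) \sum_(y <- S) dot x y = \sum_(i < size (enum_fset S)) \sum_(j < size (enum_fset S)) dot (nth 0 (enum_fset S) i) (nth 0 (enum_fset S) j).
  rewrite sum_seq_ord; apply: eq_bigr => i _; exact: sum_seq_ord.
rewrite sum_seq_ord.
set s := enum_fset S; set n := size s.
set g := fun i j : 'I_n => dot (nth 0 s i) (nth 0 s j).
have split3 : forall i : 'I_n, \sum_(j < n) g i j =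
   (\sum_(j < n | (i < j)%N) g i j + g i i + \sum_(j < n | (j < i)%N) g i j)%R.
  move=> i; rewrite (bigID (fun j : 'I_n => (i < j)%N)) /= -addrA.
congr (_ + _)%R.
  rewrite (bigD1 i) /= ?ltnn //; congr (_ + _)%R.
  by apply: eq_bigl => j /=; rewrite -leqNgt ltn_neqAle andbC.
rewrite (eq_bigr _ (fun i _ => split3 i)) !big_split /=.
have -> : \sum_(i < n) \sum_(j < n | (j < i)%N) g i j =
          \sum_(i < n) \sum_(j < n | (i < j)%N) g i j.
  rewrite (exchange_big_dep xpredT) //=.
  by apply: eq_bigr => i _; apply: eq_bigr => j _; rewrite /g dotC.
rewrite /g; set A := \sum_(i < n) _; set B := \sum_(i < n) _.
by rewrite mulr2n addrAC addrK.
Qed.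

Lemma pair_sumU1 (R : realFieldType) d (S : {fset 'rV[R]_d}) p : p \notin S ->
  pair_sum (p |` S) = (pair_sum S + \sum_(x <- S) dot p x)%R.
Proof.
move=> pS.
have H2 : forall x y : R, x *+ 2 = y *+ 2 -> x = y.
  by move=> x y /eqP; rewrite -subr_eq0 -mulrnBl mulrn_eq0 /= subr_eq0 => /eqP.
apply: H2.
rewrite mulrnDl !pair_sumE !big_fsetU1 //=.
have -> : \sum_(i <- S) \sum_(y <- p |` S) dot i y = (\sum_(i <- S) dot p i + \sum_(i <- S) \sum_(y <- S) dot i y)%R.
  by rewrite -big_split; apply: eq_bigr => x _; rewrite big_fsetU1 //= dotC.
move: (\sum_(x <- S) dot p x) (\sum_(i <- S) \sum_(i0 <- S) dot i i0) (\sum_(x <- S) dot x x) (dot p p) => A B C D.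
rewrite mulr2n; lra.
Qed.

Lemma marg (R : realFieldType) d k (lam mu : R) (q : 'rV[R]_d) (X : {fset 'rV[R]_d}) p :
  p \notin X ->
  f_avg k lam mu q (p |` X) - f_avg k lam mu q X =
  (lam / k%:R * dot p q - (2 * mu * (1 - lam)) / (k * (k - 1))%:R * \sum_(x <- X) dot p x)%R.
Proof.
move=> pX; rewrite /f_avg pair_sumU1 // big_fsetU1 //=.
move: (lam / k%:R) ((2 * mu * (1 - lam)) / (k * (k - 1))%:R) => a c.
move: (\sum_(x <- X) dot p x) (\sum_(x <- X) dot x q) (pair_sum X) (dot p q) => A B C D.
rewrite !mulrDr; lra.
Qed.

Theorem lemma1 (R : realFieldType) (d : nat) (P : {fset 'rV[R]_d})
    (q : 'rV[R]_d) (k : nat) (lam mu : R) :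
  (1 < k)%N -> 0 <= lam <= 1 -> 0 < mu ->
  (forall x y, x \in q |` P -> y \in q |` P -> 0 <= dot x y) ->
  forall (S T : {fset 'rV[R]_d}) (p : 'rV[R]_d),
    S `<=` T -> T `<=` P -> p \in P -> p \notin T ->
    f_avg k lam mu q (p |` T) - f_avg k lam mu q T
      <= f_avg k lam mu q (p |` S) - f_avg k lam mu q S.
Proof.
move=> k1 /andP[l0 l1] mu0 dpos S T p ST TP pP pT.
have pS : p \notin S by apply: contra pT; apply: (fsubsetP ST).
rewrite !marg //; rewrite lerD2l lerN2.
apply: ler_wpM2l.
  apply: divr_ge0; last exact: ler0n.
  by apply: mulr_ge0; [apply: mulr_ge0; [| exact: ltW] | rewrite subr_ge0].
have -> : \sum_(x <- S) dot p x = \sum_(x <- S) (if x \in S then dot p x else 0).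
  by apply: eq_big_seq => x ->.
rewrite (big_fset_incl _ ST); last by move=> x _ /negbTE ->.
rewrite !big_seq; apply: ler_sum => x xT; case: ifP => // _.
apply: dpos; rewrite !inE ?pP ?orbT //.
by rewrite (fsubsetP TP _ xT) orbT.
Qed.
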